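(* Let $\chi$ be a kernel as described in the context with $m_1(\chi,u)=0$ for all $u\in\mathbb{R}^+$. Let $f:\mathbb{R}^+\to\mathbb{R}$ be such that $\theta f$ and $\theta^2 f$ exist and are continuous on $\mathbb{R}^+$, and suppose there are constants $\alpha,\beta>0$ with $|f(x)|\le\alpha+\beta|\log x|$ for all $x\in\mathbb{R}^+$ (f need not be bounded). Then for every $w>0$ and $x\in\mathbb{R}^+$ the series defining $(I_w^{\chi}f)(x)$ converges absolutely, and for every $x\in\mathbb{R}^+$, $$\lim_{w\to+\infty} w\big[(I_w^{\chi}f)(x)-f(x)\big]=\frac{(\theta f)(x)}{2}.$$
   Context: A kernel is a continuous function $\chi:\mathbb{R}^+\to\mathbb{R}$ satisfying: (i) $\sum_{k=-\infty}^{+\infty}\chi(e^{-k}u)=1$ for every $u\in\mathbb{R}^+$; (ii) $M_2(\chi)<+\infty$ and $\lim_{\gamma\to+\infty}\sum_{|k-\log u|>\gamma}|\chi(e^{-k}u)|\,|k-\log u|^2=0$ uniformly with respect to $u\in\mathbb{R}^+$. Algebraic moments: $m_\nu(\chi,u)=\sum_{k\in\mathbb{Z}}\chi(e^{-k}u)(k-\log u)^\nu$; absolute moments: $M_\nu(\chi,u)=\sum_{k\in\mathbb{Z}}|\chi(e^{-k}u)|\,|k-\log u|^\nu$, $M_\nu(\chi)=\sup_{u>0}M_\nu(\chi,u)$. For $w>0$, $x\in\mathbb{R}^+$: $(I_w^{\chi}f)(x)=\sum_{k\in\mathbb{Z}}\chi(e^{-k}x^w)\,w\int_{k/w}^{(k+1)/w}f(e^u)\,du$.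 Mellin differential operator: $(\theta f)(x)=xf'(x)$, $\theta^2=\theta(\theta)$. *)

(* Defs.v *)
From Stdlib Require Import Reals Lra ZArith ClassicalEpsilon.
Open Scope R_scope.

Definition Zpartial (a : Z -> R) (N : nat) : R :=
  sum_f_R0 (fun i => a (Z.of_nat i - Z.of_nat N)%Z) (2 * N).

Definition Zseries (a : Z -> R) (l : R) : Prop := Un_cv (Zpartial a) l.

Definition Zabs_summable (a : Z -> R) : Prop :=
  exists l, Zseries (fun k => Rabs (a k)) l.

(* The value of sum_{k in Z} a k (meaningful when the series converges). *)
Definition Zsum (a : Z -> R) : R := epsilon (inhabits 0) (fun l => Zseries a l).

(* Riemann integral value of f over [a,b] (meaningful when f is integrable). *)
Definition Rint (f : R -> R) (a b : R) : R :=
  epsilon (inhabits 0)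
    (fun v => exists pr : Riemann_integrable f a b, RiemannInt pr = v).

Definition absmoment_term (chi : R -> R) (nu : nat) (u : R) (k : Z) : R :=
  Rabs (chi (exp (- IZR k) * u)) * (Rabs (IZR k - ln u)) ^ nu.

Definition moment_term (chi : R -> R) (nu : nat) (u : R) (k : Z) : R :=
  chi (exp (- IZR k) * u) * (IZR k - ln u) ^ nu.

(* Since the absolute-moment series have
   nonnegative terms, "M_2(chi) < +oo" (a sup over u of sums) is stated as a
   uniform bound on all partial sums, and the uniform limit in (ii) as a
   uniform bound on the partial sums of the tails. *)
Definition is_kernel (chi : R -> R) : Prop :=
  (forall u, 0 < u -> continuity_pt chi u) /\
  (forall u, 0 < u -> Zseries (fun k => chi (exp (- IZR k) * u)) 1) /\
  (exists B, forall u, 0 < u -> forall N, Zpartial (absmoment_term chi 2 u) N <= B) /\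
  (forall eps, 0 < eps -> exists g0, forall gamma, g0 < gamma ->
     forall u, 0 < u -> forall N,
       Zpartial (fun k => if Rlt_dec gamma (Rabs (IZR k - ln u))
                          then absmoment_term chi 2 u k else 0) N <= eps).

Definition Iw_term (chi f : R -> R) (w x : R) (k : Z) : R :=
  chi (exp (- IZR k) * Rpower x w) *
  (w * Rint (fun u => f (exp u)) (IZR k / w) ((IZR k + 1) / w)).

Definition Iw (chi f : R -> R) (w x : R) : R := Zsum (Iw_term chi f w x).

(* Main.v *)
Require Import Defs.
From Stdlib Require Import Reals Lra Lia ZArith ClassicalEpsilon.
From Coquelicot Require Import Coquelicot.
Open Scope R_scope.

Lemma Zpartial_S a N : Zpartial a (S N) =
  Zpartial a N + a (- Z.of_nat (S N))%Z + a (Z.of_nat (S N)).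
Proof.
  unfold Zpartial.
  replace (2 * S N)%nat with (S (S (2*N))) by lia.
  rewrite decomp_sum by lia. change (pred (S (S (2 * N)))) with (S (2 * N)). rewrite tech5.
  replace (sum_f_R0 (fun i : nat => a (Z.of_nat (S i) - Z.of_nat (S N))%Z) (2 * N))
   with (sum_f_R0 (fun i : nat => a (Z.of_nat i - Z.of_nat N)%Z) (2 * N)).
  2:{ apply sum_eq; intros i _; f_equal; lia. }
  replace (Z.of_nat 0 - Z.of_nat (S N))%Z with (- Z.of_nat (S N))%Z by lia.
  replace (Z.of_nat (S (S (2 * N))) - Z.of_nat (S N))%Z with (Z.of_nat (S N)) by lia.
  ring.
Qed.

Lemma sum_lin (A B : R) u v n :
  sum_f_R0 (fun i => A * u i + B * v i) n = A * sum_f_R0 u n + B * sum_f_R0 v n.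
Proof. induction n; simpl; [ring| rewrite IHn; ring]. Qed.

Lemma Zpartial_lin A B a b N :
  Zpartial (fun k => A * a k + B * b k) N = A * Zpartial a N + B * Zpartial b N.
Proof. unfold Zpartial. apply sum_lin. Qed.

Lemma Zpartial_le a b N : (forall k, a k <= b k) -> Zpartial a N <= Zpartial b N.
Proof. intros H; unfold Zpartial; apply sum_Rle; intros; apply H. Qed.

Lemma Zpartial_abs a N : Rabs (Zpartial a N) <= Zpartial (fun k => Rabs (a k)) N.
Proof. unfold Zpartial; apply sum_f_R0_triangle. Qed.

Lemma Zseries_lin A B a b la lb : Zseries a la -> Zseries b lb ->
  Zseries (fun k => A * a k + B * b k) (A * la + B * lb).
Proof.
  unfold Zseries; intros Ha Hb.
  apply is_lim_seq_Reals in Ha; apply is_lim_seq_Reals in Hb.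
  apply is_lim_seq_Reals.
  eapply is_lim_seq_ext. { intros n; symmetry; apply Zpartial_lin. }
  pose proof (is_lim_seq_scal_l _ A la Ha) as H1; simpl in H1.
  pose proof (is_lim_seq_scal_l _ B lb Hb) as H2; simpl in H2.
  exact (is_lim_seq_plus' _ _ _ _ H1 H2).
Qed.

Lemma Zsum_eq a l : Zseries a l -> Zsum a = l.
Proof.
  intros H. unfold Zsum.
  assert (H2 : Zseries a (epsilon (inhabits 0) (fun l => Zseries a l))).
  { apply epsilon_spec. exists l; exact H. }
  exact (UL_sequence _ _ _ H2 H).
Qed.

Lemma Zlim_bound a l K : Zseries a l ->
  (forall N, Zpartial (fun k => Rabs (a k)) N <= K) -> Rabs l <= K.
Proof.
  unfold Zseries; intros H HK.
  apply is_lim_seq_Reals in H.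
  apply is_lim_seq_abs in H.
  assert (Hc : is_lim_seq (fun _ : nat => K) K) by apply is_lim_seq_const.
  pose proof (is_lim_seq_le _ _ _ _ (fun n => Rle_trans _ _ _ (Zpartial_abs a n) (HK n)) H Hc) as Hle.
  exact Hle.
Qed.

Lemma Znonneg_cv a K : (forall k, 0 <= a k) -> (forall N, Zpartial a N <= K) ->
  exists l, Zseries a l.
Proof.
  intros Hp HK.
  destruct (growing_cv (Zpartial a)) as [l Hl].
  - intros n. rewrite Zpartial_S. pose proof (Hp (- Z.of_nat (S n))%Z). pose proof (Hp (Z.of_nat (S n))). lra.
  - exists K. intros y [n ->]. apply HK.
  - exists l; exact Hl.
Qed.

Lemma Zpartial_diff a n d :
  Rabs (Zpartial a (n + d) - Zpartial a n) <=
  Zpartial (fun k => Rabs (a k)) (n + d) - Zpartial (fun k => Rabs (a k)) n.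
Proof.
  induction d.
  - rewrite Nat.add_0_r. replace (Zpartial a n - Zpartial a n) with 0 by ring.
    rewrite Rabs_R0; lra.
  - rewrite Nat.add_succ_r, !Zpartial_S.
    set (p := Zpartial a (n + d)) in *.
    set (q := Zpartial a n) in *.
    set (x1 := a (- Z.of_nat (S (n + d)))%Z). set (x2 := a (Z.of_nat (S (n + d)))).
    replace (p + x1 + x2 - q) with ((p - q) + (x1 + x2)) by ring.
    eapply Rle_trans; [apply Rabs_triang|].
    pose proof (Rabs_triang x1 x2). lra.
Qed.

Lemma Zabs_cv a : Zabs_summable a -> exists l, Zseries a l.
Proof.
  intros [L HL].
  assert (Hc : Cauchy_crit (fun k => Zpartial (fun k => Rabs (a k)) k)).
  { apply CV_Cauchy. exists L; exact HL. }
  destruct (Rcomplete.R_complete (Zpartial a)) as [l Hl].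
  2:{ exists l; exact Hl. }
  intros eps Heps. destruct (Hc eps Heps) as [N HN]. exists N.
  intros n m Hn Hm. unfold Rdist.
  destruct (Nat.le_ge_cases n m) as [Hnm|Hnm].
  - replace m with (n + (m - n))%nat by lia.
    pose proof (Zpartial_diff a n (m - n)) as D.
    specialize (HN (n + (m-n))%nat n ltac:(lia) Hn). unfold Rdist in HN.
    rewrite Rabs_minus_sym.
    eapply Rle_lt_trans; [exact D|]. eapply Rle_lt_trans; [apply Rle_abs| exact HN].
  - replace n with (m + (n - m))%nat by lia.
    pose proof (Zpartial_diff a m (n - m)) as D.
    specialize (HN (m + (n-m))%nat m ltac:(lia) Hm). unfold Rdist in HN.
    eapply Rle_lt_trans; [exact D|]. eapply Rle_lt_trans; [apply Rle_abs| exact HN].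
Qed.

Lemma lip F F' a b L :
  (forall s, Rmin a b <= s <= Rmax a b -> derivable_pt_lim F s (F' s)) ->
  (forall s, Rmin a b <= s <= Rmax a b -> Rabs (F' s) <= L) ->
  Rabs (F b - F a) <= L * Rabs (b - a).
Proof.
  intros HD HL.
  destruct (Rtotal_order a b) as [Hab|[Hab|Hab]].
  - rewrite Rmin_left in HD, HL by lra. rewrite Rmax_right in HD, HL by lra.
    destruct (MVT_cor2 F F' a b Hab HD) as [c [Hc1 Hc2]].
    rewrite Hc1, Rabs_mult. apply Rmult_le_compat_r; [apply Rabs_pos|apply HL; lra].
  - assert (0 <= L).
    { eapply Rle_trans; [apply Rabs_pos| apply (HL a)]. rewrite Rmin_left, Rmax_left; lra. }
    subst. replace (F b - F b) with 0 by ring. replace (b - b) with 0 by ring.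
    rewrite Rabs_R0. lra.
  - rewrite Rmin_right in HD, HL by lra. rewrite Rmax_left in HD, HL by lra.
    destruct (MVT_cor2 F F' b a Hab HD) as [c [Hc1 Hc2]].
    rewrite Rabs_minus_sym, (Rabs_minus_sym b a).
    rewrite Hc1, Rabs_mult. apply Rmult_le_compat_r; [apply Rabs_pos|apply HL; lra].
Qed.

Lemma between_abs t0 u s : Rmin t0 u <= s <= Rmax t0 u -> Rabs (s - t0) <= Rabs (u - t0).
Proof.
  intros [H1 H2]. unfold Rmin, Rmax in *.
  destruct (Rle_dec t0 u); unfold Rabs; repeat destruct Rcase_abs; lra.
Qed.

Section Taylor.
Variables (g h h2 : R -> R) (t0 : R) (A0 A1 : R).
Hypothesis dg : forall u, derivable_pt_lim g u (h u).
Hypothesis dh : forall u, derivable_pt_lim h u (h2 u).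
Hypothesis ch2 : forall u, continuity_pt h2 u.
Hypothesis HA1 : 0 <= A1.
Hypothesis growth : forall u, Rabs (g u) <= A0 + A1 * Rabs (u - t0).

Lemma taylor_bound : exists C, 0 <= C /\
  forall u, Rabs (g u - g t0 - h t0 * (u - t0)) <= C * (u - t0) ^ 2.
Proof.
  destruct (continuity_ab_maj (fun s => Rabs (h2 s)) (t0 - 1) (t0 + 1)) as [Mx [HM _]].
  { lra. }
  { intros c _. apply (continuity_pt_comp h2 Rabs). apply ch2. apply Rcontinuity_abs. }
  set (K := Rabs (h2 Mx)) in *.
  assert (HK0 : 0 <= K) by apply Rabs_pos.
  set (B0 := A0 + Rabs (g t0)). set (B1 := A1 + Rabs (h t0)).
  assert (HA0 : 0 <= A0 + A1 * Rabs (t0 - t0)) by (eapply Rle_trans; [apply Rabs_pos| apply growth]).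
  replace (t0 - t0) with 0 in HA0 by ring. rewrite Rabs_R0, Rmult_0_r, Rplus_0_r in HA0.
  exists (K + B0 + B1). split.
  { unfold B0, B1. pose proof (Rabs_pos (g t0)); pose proof (Rabs_pos (h t0)); lra. }
  intros u.
  set (q := Rabs (u - t0)).
  assert (Hq : (u - t0) ^ 2 = q * q) by (unfold q; rewrite <- Rabs_mult; rewrite Rabs_right; [ring| apply Rle_ge; apply Rle_0_sqr]).
  assert (Hq0 : 0 <= q) by apply Rabs_pos.
  destruct (Rle_dec q 1) as [Hnear|Hfar].
  -
    assert (Hh : forall s, Rmin t0 u <= s <= Rmax t0 u -> Rabs (h s - h t0) <= K * q).
    { intros s Hs. pose proof (between_abs _ _ _ Hs) as Hs'.
      eapply Rle_trans.
      - apply (lip h h2 t0 s K).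
        + intros; apply dh.
        + intros r Hr. apply HM. pose proof (between_abs _ _ _ Hr).
          fold q in Hs'. unfold Rabs in *; repeat destruct Rcase_abs; lra.
      - apply Rmult_le_compat_l; assumption. }
    pose proof (lip (fun s => g s - g t0 - h t0 * (s - t0)) (fun s => h s - h t0) t0 u (K * q)) as HL.
    simpl in HL.
    replace (g t0 - g t0 - h t0 * (t0 - t0)) with 0 in HL by ring.
    rewrite Rminus_0_r in HL. fold q in HL.
    eapply Rle_trans; [apply HL|].
    + intros s _.
      replace (h s - h t0) with (h s - 0 - h t0 * 1) by ring.
      apply derivable_pt_lim_minus; [apply derivable_pt_lim_minus; [apply dg| apply derivable_pt_lim_const]|].
      apply derivable_pt_lim_scal.
      replace 1 with (1 - 0) by ring.
      apply derivable_pt_lim_minus; [apply derivable_pt_lim_id| apply derivable_pt_lim_const].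
    + exact Hh.
    + rewrite Hq. pose proof (Rabs_pos (g t0)); pose proof (Rabs_pos (h t0)).
      unfold B0, B1. nra.
  -
    assert (Hq1 : 1 <= q) by lra.
    eapply Rle_trans.
    { unfold Rminus at 1. eapply Rle_trans; [apply Rabs_triang|].
      rewrite Rabs_Ropp. apply Rplus_le_compat_r. unfold Rminus; apply Rabs_triang. }
    rewrite Rabs_Ropp, Rabs_mult. fold q. rewrite Hq.
    pose proof (growth u) as Gu. fold q in Gu.
    pose proof (Rabs_pos (g t0)); pose proof (Rabs_pos (h t0)).
    unfold B0, B1.
    assert (E1 : q <= q * q) by nra. assert (E2 : 1 <= q * q) by nra.
    assert (0 <= K * (q*q)) by nra.
    pose proof (Rmult_le_compat_l _ _ _ HA0 E2). pose proof (Rmult_le_compat_l _ _ _ HA1 E1).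
    pose proof (Rmult_le_compat_l _ _ _ (Rabs_pos (g t0)) E2).
    pose proof (Rmult_le_compat_l _ _ _ (Rabs_pos (h t0)) E1). nra.
Qed.
End Taylor.

Section Int.
Variables (g h : R -> R) (t0 C : R).
Hypothesis dg : forall u, derivable_pt_lim g u (h u).
Hypothesis HC : 0 <= C.
Hypothesis HT : forall u, Rabs (g u - g t0 - h t0 * (u - t0)) <= C * (u - t0) ^ 2.

Lemma g_cont u : continuous g u.
Proof. apply continuity_pt_filterlim. apply derivable_continuous_pt. exists (h u). apply dg. Qed.

Lemma Rint_RInt a b : a <= b -> Rint g a b = RInt g a b.
Proof.
  intros Hab.
  assert (Hex : ex_RInt g a b) by (apply (ex_RInt_continuous (V:=R_CompleteNormedModule)); intros; apply g_cont).
  pose proof (ex_RInt_Reals_0 _ _ _ Hex) as pr.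
  unfold Rint.
  assert (Hs : exists pr : Riemann_integrable g a b,
     RiemannInt pr = epsilon (inhabits 0) (fun v => exists pr : Riemann_integrable g a b, RiemannInt pr = v)).
  { apply (epsilon_spec (inhabits 0) (fun v => exists pr : Riemann_integrable g a b, RiemannInt pr = v)).
    exists (RiemannInt pr). exists pr. reflexivity. }
  destruct Hs as [pr' Hpr']. rewrite <- Hpr'. symmetry. apply RInt_Reals.
Qed.

Lemma int_bound w z : 0 < w ->
  Rabs (w * Rint g (z / w) ((z + 1) / w) - (g t0 + h t0 * (z - w * t0 + 1/2) / w))
  <= (2 * C) * ((z - w * t0) ^ 2 + 1) / (w * w).
Proof.
  intros Hw.
  set (a := z / w). set (b := (z + 1) / w).
  assert (Hab : a <= b) by (unfold a, b; apply Rmult_le_compat_r; [left; apply Rinv_0_lt_compat; lra| lra]).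
  rewrite Rint_RInt by exact Hab.
  set (lin := fun s => g t0 + h t0 * (s - t0)).
  set (P := fun s => g t0 * s + h t0 * ((s - t0) ^ 2 / 2)).
  assert (Hlin : is_RInt lin a b (P b - P a)).
  { apply (is_RInt_derive (V:=R_CompleteNormedModule) P lin).
    - intros s _. unfold P, lin. auto_derive; [easy| field].
    - intros s _. apply continuity_pt_filterlim. apply derivable_continuous_pt. unfold lin. apply derivable_pt_plus; [apply derivable_pt_const| apply derivable_pt_mult; [apply derivable_pt_const| apply derivable_pt_minus; [apply derivable_pt_id| apply derivable_pt_const]]]. }
  assert (Hexg : ex_RInt g a b) by (apply (ex_RInt_continuous (V:=R_CompleteNormedModule)); intros; apply g_cont).
  assert (Hexl : ex_RInt lin a b) by (eexists; exact Hlin).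
  assert (Hsplit : RInt g a b = (P b - P a) + RInt (fun s => g s - lin s) a b).
  { assert (E := RInt_minus (V:=R_CompleteNormedModule) g lin a b Hexg Hexl).
    change (RInt (fun s => g s - lin s) a b = RInt g a b - RInt lin a b) in E.
    rewrite E. rewrite (is_RInt_unique _ _ _ _ Hlin). apply eq_sym, Rplus_minus. }
  assert (HPw : w * (P b - P a) = g t0 + h t0 * (z - w * t0 + 1/2) / w).
  { unfold P, a, b. field. lra. }
  assert (Hexr : ex_RInt (fun s => g s - lin s) a b).
  { apply (ex_RInt_minus (V:=R_CompleteNormedModule) g lin); assumption. }
  set (M := C * (2 * ((z - w * t0) ^ 2 + 1)) / (w * w)).
  assert (Hbd : Rabs (RInt (fun s => g s - lin s) a b) <= (b - a) * M).
  { apply abs_RInt_le_const; [exact Hab| exact Hexr|].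
    intros t Ht. change (Rabs (g t - lin t) <= (b - a) * M) with (Rabs (g t - lin t) <= M).
    replace (g t - lin t) with (g t - g t0 - h t0*(t-t0)) by (unfold lin; ring).
    eapply Rle_trans; [apply HT|].
    unfold M. unfold Rdiv. rewrite Rmult_assoc. apply Rmult_le_compat_l; [exact HC|].
    assert (Hwt : z <= w * t <= z + 1).
    { unfold a, b in Ht. destruct Ht as [H1 H2].
      split.
      - apply (Rmult_le_compat_l w) in H1; [|lra]. replace (w * (z / w)) with z in H1 by (field; lra). exact H1.
      - apply (Rmult_le_compat_l w) in H2; [|lra]. replace (w * ((z + 1) / w)) with (z + 1) in H2 by (field; lra). exact H2. }
    assert (Hs : (w * t - w * t0) ^ 2 <= 2 * ((z - w * t0) ^ 2 + 1)).
    { set (d := z - w * t0). set (th := w * t - z).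
      replace (w * t - w * t0) with (d + th) by (unfold d, th; ring).
      assert (0 <= th <= 1) by (unfold th; lra).
      pose proof (Rle_0_sqr (d - th)). unfold Rsqr in *. nra. }
    replace ((t - t0) ^ 2) with ((w * t - w * t0) ^ 2 * / (w * w)) by (field; lra).
    apply Rmult_le_compat_r; [left; apply Rinv_0_lt_compat; nra| exact Hs]. }
  rewrite Hsplit, Rmult_plus_distr_l, HPw.
  replace (g t0 + h t0 * (z - w * t0 + 1 / 2) / w + w * RInt (fun s : R => g s - lin s) a b -
      (g t0 + h t0 * (z - w * t0 + 1 / 2) / w)) with (w * RInt (fun s : R => g s - lin s) a b) by ring.
  rewrite Rabs_mult, (Rabs_right w) by lra.
  replace ((2 * C) * ((z - w * t0) ^ 2 + 1) / (w * w)) with (w * ((b - a) * M)).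
  - apply Rmult_le_compat_l; [lra| exact Hbd].
  - unfold M, a, b. field. lra.
Qed.
End Int.

Lemma exp_le_mono a b : a <= b -> exp a <= exp b.
Proof. intros [H|H]; [left; apply exp_increasing; exact H| subst; lra]. Qed.

Definition Fcl (t : R) := Rmin (Rmax t (-1)) 2.

Lemma Fcl_range t : -1 <= Fcl t <= 2.
Proof. unfold Fcl, Rmin, Rmax; repeat destruct Rle_dec; lra. Qed.

Lemma Fcl_mono t : 0 <= Fcl (t + 1) - Fcl t.
Proof. unfold Fcl, Rmin, Rmax; repeat destruct Rle_dec; lra. Qed.

Lemma Fcl_near t : -1 < t < 1 -> Fcl (t + 1) - Fcl t = 1.
Proof. intros H; unfold Fcl, Rmin, Rmax; repeat destruct Rle_dec; lra. Qed.

Lemma sum_tele (G : nat -> R) n : sum_f_R0 (fun i => G (S i) - G i) n = G (S n) - G 0%nat.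
Proof. induction n; simpl; [ring| rewrite IHn; ring]. Qed.

Lemma tele_bound c N :
  Zpartial (fun k => Fcl (IZR k + 1 - c) - Fcl (IZR k - c)) N <= 3.
Proof.
  unfold Zpartial.
  set (G := fun i : nat => Fcl (IZR (Z.of_nat i - Z.of_nat N) - c)).
  rewrite (sum_eq _ (fun i => G (S i) - G i)).
  - rewrite sum_tele. pose proof (Fcl_range (IZR (Z.of_nat (S (2*N)) - Z.of_nat N) - c)).
    pose proof (Fcl_range (IZR (Z.of_nat 0 - Z.of_nat N) - c)). unfold G. lra.
  - intros i _. unfold G.
    replace (Z.of_nat (S i) - Z.of_nat N)%Z with ((Z.of_nat i - Z.of_nat N) + 1)%Z by lia.
    rewrite plus_IZR. f_equal; f_equal; try ring.
Qed.

Lemma Zpartial_scal A a N : Zpartial (fun k => A * a k) N = A * Zpartial a N.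
Proof. unfold Zpartial. induction (2 * N)%nat; simpl; [ring| rewrite IHn; ring]. Qed.

Lemma kernel_M0 chi : is_kernel chi -> exists P, 0 <= P /\
  forall u, 0 < u -> forall N,
    Zpartial (fun k => Rabs (chi (exp (- IZR k) * u)) * ((IZR k - ln u) ^ 2 + 1)) N <= P.
Proof.
  intros [Hc [_ [[B HB] _]]].
  destruct (continuity_ab_maj (fun v => Rabs (chi v)) (exp (-1)) (exp 1)) as [Mx [HM _]].
  { apply exp_le_mono; lra. }
  { intros c Hc'. apply (continuity_pt_comp chi Rabs). apply Hc.
    pose proof (exp_pos (-1)); lra. apply Rcontinuity_abs. }
  set (Mc := Rabs (chi Mx)) in *.
  assert (HMc : 0 <= Mc) by apply Rabs_pos.
  exists (2 * Rabs B + 3 * Mc). split; [pose proof (Rabs_pos B); lra|].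
  intros u Hu N.
  eapply Rle_trans.
  { apply (Zpartial_le _ (fun k => 2 * absmoment_term chi 2 u k +
        Mc * (Fcl (IZR k + 1 - ln u) - Fcl (IZR k - ln u)))).
    intros k. unfold absmoment_term.
    set (t := IZR k - ln u). set (v := exp (- IZR k) * u).
    replace (IZR k + 1 - ln u) with (t + 1) by (unfold t; ring).
    assert (Ht2 : Rabs t ^ 2 = t ^ 2) by (simpl; rewrite !Rmult_1_r, <- Rabs_mult; apply Rabs_right; nra).
    rewrite Ht2.
    pose proof (Rabs_pos (chi v)).
    destruct (Rlt_dec (Rabs t) 1) as [Hn|Hf].
    - assert (Hv : exp (-1) <= v <= exp 1).
      { unfold v. rewrite <- (exp_ln u Hu), <- exp_plus.
        assert (-1 < t < 1) by (unfold Rabs in Hn; destruct Rcase_abs; lra).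
        split; apply exp_le_mono; unfold t in *; lra. }
      pose proof (HM v Hv). rewrite Fcl_near by (unfold Rabs in Hn; destruct Rcase_abs; lra).
      assert (0 <= Rabs (chi v) * t ^ 2) by (apply Rmult_le_pos; [lra| simpl; nra]).
      lra.
    - pose proof (Fcl_mono t). assert (1 <= t ^ 2).
      { assert (1 <= Rabs t) by lra. rewrite <- Ht2. simpl. nra. }
      assert (Rabs (chi v) <= Rabs (chi v) * t ^ 2) by nra.
      pose proof (Rmult_le_pos _ _ HMc H0). lra. }
  rewrite Zpartial_lin.
  pose proof (HB u Hu N). pose proof (tele_bound (ln u) N).
  pose proof (Rle_abs B).
  assert (Mc * Zpartial (fun k => Fcl (IZR k + 1 - ln u) - Fcl (IZR k - ln u)) N <= Mc * 3)
    by (apply Rmult_le_compat_l; assumption).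
  lra.
Qed.

Lemma key (f d1 d2 : R -> R) (alpha beta x : R) :
  (forall x, 0 < x -> derivable_pt_lim f x (d1 x)) ->
  (forall x, 0 < x -> derivable_pt_lim (fun y => y * d1 y) x (d2 x)) ->
  (forall x, 0 < x -> continuity_pt (fun y => y * d2 y) x) ->
  0 < beta ->
  (forall x, 0 < x -> Rabs (f x) <= alpha + beta * Rabs (ln x)) ->
  0 < x ->
  exists C, 0 <= C /\ forall w k, 0 < w ->
    Rabs (w * Rint (fun u => f (exp u)) (IZR k / w) ((IZR k + 1) / w)
          - (f x + x * d1 x * (IZR k - w * ln x + 1/2) / w))
    <= C * ((IZR k - w * ln x) ^ 2 + 1) / (w * w).
Proof.
  intros Hd1 Hd2 Hc2 Hb Hg Hx.
  set (g := fun u => f (exp u)).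
  set (h := fun u => exp u * d1 (exp u)).
  set (h2 := fun u => exp u * d2 (exp u)).
  assert (dg : forall u, derivable_pt_lim g u (h u)).
  { intros u. unfold g, h. rewrite Rmult_comm.
    apply (derivable_pt_lim_comp exp f). apply derivable_pt_lim_exp. apply Hd1, exp_pos. }
  assert (dh : forall u, derivable_pt_lim h u (h2 u)).
  { intros u. unfold h, h2. rewrite Rmult_comm.
    apply (derivable_pt_lim_comp exp (fun y => y * d1 y)). apply derivable_pt_lim_exp.
    apply Hd2, exp_pos. }
  assert (ch2 : forall u, continuity_pt h2 u).
  { intros u. unfold h2. apply (continuity_pt_comp exp (fun y => y * d2 y)).
    apply derivable_continuous_pt, derivable_pt_exp. apply Hc2, exp_pos. }
  set (t0 := ln x).
  assert (growth : forall u, Rabs (g u) <= (alpha + beta * Rabs t0) + beta * Rabs (u - t0)).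
  { intros u. unfold g. eapply Rle_trans; [apply Hg, exp_pos|]. rewrite ln_exp.
    pose proof (Rabs_triang (u - t0) t0). replace (u - t0 + t0) with u in H by ring.
    pose proof (Rmult_le_compat_l beta _ _ (Rlt_le _ _ Hb) H). lra. }
  destruct (taylor_bound g h h2 t0 (alpha + beta * Rabs t0) beta dg dh ch2 ltac:(lra) growth) as [C0 [HC0 HT]].
  exists (2 * C0). split; [lra|].
  intros w k Hw.
  pose proof (int_bound g h t0 C0 dg HC0 HT w (IZR k) Hw) as Hi.
  unfold g in Hi. unfold h in Hi. unfold t0 in Hi. rewrite exp_ln in Hi by exact Hx.
  exact Hi.
Qed.

Theorem mainTheorem3 (chi f d1 d2 : R -> R) (alpha beta : R) :
  is_kernel chi ->
  (forall u, 0 < u -> Zseries (moment_term chi 1 u) 0) ->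
  (forall x, 0 < x -> derivable_pt_lim f x (d1 x)) ->
  (forall x, 0 < x -> continuity_pt (fun y => y * d1 y) x) ->
  (forall x, 0 < x -> derivable_pt_lim (fun y => y * d1 y) x (d2 x)) ->
  (forall x, 0 < x -> continuity_pt (fun y => y * d2 y) x) ->
  0 < alpha -> 0 < beta ->
  (forall x, 0 < x -> Rabs (f x) <= alpha + beta * Rabs (ln x)) ->
  (forall w x, 0 < w -> 0 < x -> Zabs_summable (Iw_term chi f w x)) /\
  (forall x, 0 < x ->
     forall eps, 0 < eps -> exists W, forall w, W < w ->
       Rabs (w * (Iw chi f w x - f x) - (x * d1 x) / 2) < eps).
Proof.
  intros Hk Hm Hd1 Hc1 Hd2 Hc2 Ha Hb Hg.
  destruct (kernel_M0 chi Hk) as [P [HP HPb]].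
  assert (Part1 : forall w x, 0 < w -> 0 < x -> Zabs_summable (Iw_term chi f w x)).
  { intros w x Hw Hx.
    destruct (key f d1 d2 alpha beta x Hd1 Hd2 Hc2 Hb Hg Hx) as [C [HC HK]].
    set (u := Rpower x w).
    assert (Hu : 0 < u) by (unfold u, Rpower; apply exp_pos).
    assert (Hlnu : ln u = w * ln x) by (unfold u; apply ln_Rpower).
    set (D := Rabs (f x) + Rabs (x * d1 x) / w + C / (w * w)).
    assert (HD : 0 <= D).
    { unfold D. pose proof (Rabs_pos (f x)); pose proof (Rabs_pos (x * d1 x)).
      assert (0 <= Rabs (x * d1 x) / w) by (apply Rdiv_le_0_compat; lra).
      assert (0 <= C / (w * w)) by (apply Rdiv_le_0_compat; nra). lra. }
    apply (Znonneg_cv _ (D * P)).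
    - intros; apply Rabs_pos.
    - intros N. eapply Rle_trans.
      + apply (Zpartial_le _ (fun k => D * (Rabs (chi (exp (- IZR k) * u)) * ((IZR k - ln u) ^ 2 + 1)))).
        intros k. unfold Iw_term. fold u. rewrite Rabs_mult.
        rewrite (Rmult_comm D), Rmult_assoc. apply Rmult_le_compat_l; [apply Rabs_pos|].
        rewrite Hlnu.
        set (T := w * Rint (fun u0 : R => f (exp u0)) (IZR k / w) ((IZR k + 1) / w)).
        pose proof (HK w k Hw) as Hk'. fold T in Hk'.
        set (s := IZR k - w * ln x) in *.
        assert (Hs1 : 1 <= s ^ 2 + 1) by (simpl; nra).
        assert (Hs2 : Rabs (s + 1/2) <= s ^ 2 + 1) by (unfold Rabs; destruct Rcase_abs; simpl; nra).
        assert (Hlin : Rabs (f x + x * d1 x * (s + 1/2) / w) <= Rabs (f x) * (s^2+1) + Rabs (x * d1 x) / w * (s^2+1)).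
        { eapply Rle_trans; [apply Rabs_triang|]. apply Rplus_le_compat.
          - pose proof (Rabs_pos (f x)). nra.
          - unfold Rdiv. rewrite !Rabs_mult, (Rabs_inv w), (Rabs_right w) by lra.
            pose proof (Rabs_pos (x * d1 x)). pose proof (Rabs_pos (s + 1/2)).
            assert (0 < / w) by (apply Rinv_0_lt_compat; lra).
            unfold Rdiv in Hs2.
            replace (Rabs x * Rabs (d1 x) * Rabs (s + 1 * / 2) * / w) with (Rabs x * Rabs (d1 x) * / w * Rabs (s + 1 * / 2)) by ring.
            apply Rmult_le_compat_l; [|exact Hs2].
            pose proof (Rabs_pos x); pose proof (Rabs_pos (d1 x)).
            apply Rmult_le_pos; [apply Rmult_le_pos|]; lra. }
        replace (C * (s ^ 2 + 1) / (w * w)) with (C / (w * w) * (s ^ 2 + 1)) in Hk' by (field; lra).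
        replace T with ((T - (f x + x * d1 x * (s + 1 / 2) / w)) + (f x + x * d1 x * (s + 1 / 2) / w)) by ring.
        eapply Rle_trans; [apply Rabs_triang|]. unfold D. lra.
      + rewrite Zpartial_scal. apply Rmult_le_compat_l; [exact HD| apply HPb; exact Hu]. }
  split; [exact Part1|].
  intros x Hx eps Heps.
  destruct (key f d1 d2 alpha beta x Hd1 Hd2 Hc2 Hb Hg Hx) as [C [HC HK]].
  assert (HCP : 0 <= C * P) by nra.
  exists (C * P / eps + 1). intros w Hw.
  assert (Hw0 : 0 < w) by (assert (0 <= C * P / eps) by (apply Rdiv_le_0_compat; lra); lra).
  set (u := Rpower x w).
  assert (Hu : 0 < u) by (unfold u, Rpower; apply exp_pos).
  assert (Hlnu : ln u = w * ln x) by (unfold u; apply ln_Rpower).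
  destruct (Zabs_cv _ (Part1 w x Hw0 Hx)) as [l Hl].
  unfold Iw. rewrite (Zsum_eq _ _ Hl).
  set (A := f x + x * d1 x / (2 * w)). set (Bc := x * d1 x / w).
  destruct Hk as [_ [Hk1 _]].
  pose proof (Zseries_lin A Bc _ _ _ _ (Hk1 u Hu) (Hm u Hu)) as HL.
  pose proof (Zseries_lin 1 (-1) _ _ _ _ Hl HL) as HE.
  pose proof (Zlim_bound _ _ (C * P / (w * w)) HE) as Hbd.
  assert (Hl2 : Rabs (l - A) <= C * P / (w * w)).
  { replace (l - A) with (1 * l + -1 * (A * 1 + Bc * 0)) by ring.
    apply Hbd. intros N.
    eapply Rle_trans.
    - apply (Zpartial_le _ (fun k => C / (w * w) * (Rabs (chi (exp (- IZR k) * u)) * ((IZR k - ln u) ^ 2 + 1)))).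
      intros k. unfold Iw_term, moment_term. fold u. rewrite Hlnu.
      pose proof (HK w k Hw0) as Hk'.
      set (T := w * Rint (fun u0 : R => f (exp u0)) (IZR k / w) ((IZR k + 1) / w)) in *.
      set (s := IZR k - w * ln x) in *.
      set (ch := chi (exp (- IZR k) * u)).
      replace (1 * (ch * T) + -1 * (A * ch + Bc * (ch * s ^ 1)))
        with (ch * (T - (f x + x * d1 x * (s + 1 / 2) / w))) by (unfold A, Bc; simpl; field; lra).
      rewrite Rabs_mult.
      replace (C / (w * w) * (Rabs ch * (s ^ 2 + 1))) with (Rabs ch * (C * (s ^ 2 + 1) / (w * w))) by (field; lra).
      apply Rmult_le_compat_l; [apply Rabs_pos| exact Hk'].
    - rewrite Zpartial_scal.
      replace (C * P / (w * w)) with (C / (w * w) * P) by (field; lra).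
      apply Rmult_le_compat_l; [apply Rdiv_le_0_compat; nra| apply HPb; exact Hu]. }
  replace (w * (l - f x) - x * d1 x / 2) with (w * (l - A)) by (unfold A; field; lra).
  rewrite Rabs_mult, (Rabs_right w) by lra.
  apply Rle_lt_trans with (w * (C * P / (w * w))).
  - apply Rmult_le_compat_l; lra.
  - replace (w * (C * P / (w * w))) with (C * P / w) by (field; lra).
    apply (Rmult_lt_reg_r w); [lra|].
    replace (C * P / w * w) with (C * P) by (field; lra).
    assert (C * P / eps * eps = C * P) by (field; lra).
    assert (C * P / eps < w) by lra.
    nra.
Qed.
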